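(* Let $\mathbf X=(X_1,\dots,X_k)$, $2\le k\le n-1$, be homogeneous coordinates of proper cycles and $S$ a vector with $(S\mid S)\le0$, with $X_1,\dots,X_k,S$ linearly independent and $\Delta(\mathbf X,S)<0$. Let $y$ be a proper cycle with $y\notin\langle\mathbf x,s\rangle$ and $(Y\mid S)\ne0$. Define $h(x)=\Delta(X,Y,S)/(\Delta(X,S)\Delta(Y,S))$ on the open set of $x\in\langle\mathbf x,s\rangle$ with $\Delta(X,S)\neq0$. Let $p=P_{\langle\mathbf x,s\rangle}(y)$ (coordinates $P_{\langle\mathbf X,S\rangle}Y$) and assume $p\neq s$. Then $h$ is defined at $p$, $h(p)=\delta(\mathbf x,y,s)$, and $p$ is a critical point of $h$. If moreover $(S\mid S)<0$, then there is a cycle $x_0\in\langle\mathbf x,s\rangle\cap\langle s\rangle^\perp$, $x_0\neq s$, with $(X_0\mid Y)=0$; every such $x_0$ is a critical point of $h$ and $h(x_0)=1/(S\mid S)$.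
   Context: Let $n\ge 3$. For $X=(\xi_0,\boldsymbol\xi_1,\xi_2,\xi_3)$ and $Y=(\eta_0,\boldsymbol\eta_1,\eta_2,\eta_3)$ in $\mathbb{R}^{n+3}=\mathbb{R}\times\mathbb{R}^n\times\mathbb{R}\times\mathbb{R}$, the Lie product is the nondegenerate symmetric bilinear form $(X\mid Y)=\xi_0\eta_2+\boldsymbol\xi_1\cdot\boldsymbol\eta_1+\xi_2\eta_0-\xi_3\eta_3$. Points of $\mathbb{P}^{n+2}$ are cycles; lowercase letters denote cycles and uppercase letters their homogeneous coordinate vectors; a cycle is proper if $(X\mid X)=0$. For a list $\mathbf X$, $\langle\mathbf X\rangle$ is its span, $\langle\mathbf x\rangle$ the projective subspace, $\langle s\rangle^\perp$ the projectivization of $\{Z:(Z\mid S)=0\}$, and $\Delta(\mathbf X)=\det[(X_i\mid X_j)]$. $P_{\langle\mathbf X,S\rangle}$ is the Lie orthogonal projection onto $\langle\mathbf X,S\rangle$ along $\langle\mathbf X,S\rangle^\perp$, and $P_{\langle\mathbf x,s\rangle}$ the induced projective map. The discriminant is $\delta(\mathbf x,y,s)=\Delta(\mathbf X,Y,S)/(\Delta(\mathbf X,S)\Delta(Y,S))$. *)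

(* Defs.v *)
From HB Require Import structures.
From mathcomp Require Import all_boot all_order all_algebra.
Set Implicit Arguments. Unset Strict Implicit. Unset Printing Implicit Defensive.
Import Order.TTheory GRing.Theory Num.Theory.
Local Open Scope ring_scope.

(* Vectors of R^{n+3} = R x R^n x R x R are row vectors 'rV[R]_(n.+3):
   index 0 = xi_0, indices 1..n = bold xi_1, index n+1 = xi_2, index n+2 = xi_3. *)

Definition lie {R : realFieldType} {n : nat} (X Y : 'rV[R]_(n.+3)) : R :=
  X 0 ord0 * Y 0 (inord n.+1)
  + \sum_(i < n) X 0 (inord i.+1) * Y 0 (inord i.+1)
  + X 0 (inord n.+1) * Y 0 ord0
  - X 0 (inord n.+2) * Y 0 (inord n.+2).

Definition Delta {R : realFieldType} {n : nat} (s : seq 'rV[R]_(n.+3)) : R :=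
  \det (\matrix_(i < size s, j < size s) lie s`_i s`_j).

Definition hfun {R : realFieldType} {n : nat} (Y S X : 'rV[R]_(n.+3)) : R :=
  Delta [:: X; Y; S] / (Delta [:: X; S] * Delta [:: Y; S]).

Definition discr {R : realFieldType} {n : nat}
    (Xs : seq 'rV[R]_(n.+3)) (Y S : 'rV[R]_(n.+3)) : R :=
  Delta (Xs ++ [:: Y; S]) / (Delta (rcons Xs S) * Delta [:: Y; S]).

Definition has_deriv {R : realFieldType} (f : R -> R) (t0 l : R) : Prop :=
  forall eps : R, 0 < eps -> exists2 d : R, 0 < d &
    forall t : R, 0 < `|t - t0| < d -> `|(f t - f t0) / (t - t0) - l| < eps.

(* x (coordinates P in the subspace W) is a critical point of a function h
   defined on (an open subset of) the projective subspace <W>: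
   all directional derivatives of h at P along W vanish. *)
Definition critical_point {R : realFieldType} {n : nat}
    (W : {vspace 'rV[R]_(n.+3)}) (h : 'rV[R]_(n.+3) -> R) (P : 'rV[R]_(n.+3)) : Prop :=
  forall V, V \in W -> has_deriv (fun t => h (P + t *: V)) 0 0.

(* Main.v *)
Require Import Defs.
From HB Require Import structures.
From mathcomp Require Import all_boot all_order all_algebra.
From mathcomp Require Import all_fingroup ring lra.
Import Order.TTheory GRing.Theory Num.Theory.
Local Open Scope ring_scope.

Set Implicit Arguments. Unset Strict Implicit.

Section L.
Variables (R : realFieldType) (n : nat).
Local Notation V := 'rV[R]_(n.+3).

Lemma lieC (X Y : V) : lie X Y = lie Y X.
Proof. rewrite /lie; under eq_bigr do rewrite mulrC; ring. Qed.

Lemma lieDZl a (X Y Z : V) : lie (a *: X + Y) Z = a * lie X Z + lie Y Z.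
Proof.
rewrite /lie !mxE.
under eq_bigr do rewrite !mxE mulrDl -mulrA.
rewrite big_split /= -mulr_sumr. ring.
Qed.

Lemma lie0l (Z : V) : lie 0 Z = 0.
Proof. rewrite /lie big1 => [|i _]; rewrite !mxE ?mul0r //; ring. Qed.
Lemma lieDl (X Y Z : V) : lie (X + Y) Z = lie X Z + lie Y Z.
Proof. by have := lieDZl 1 X Y Z; rewrite scale1r mul1r. Qed.
Lemma lieZl a (X Z : V) : lie (a *: X) Z = a * lie X Z.
Proof. by have := lieDZl a X 0 Z; rewrite addr0 lie0l addr0. Qed.
Lemma lieNl (X Z : V) : lie (- X) Z = - lie X Z.
Proof. by rewrite -scaleN1r lieZl mulN1r. Qed.
Lemma lieBl (X Y Z : V) : lie (X - Y) Z = lie X Z - lie Y Z.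
Proof. by rewrite lieDl lieNl. Qed.
Lemma lie0r (Z : V) : lie Z 0 = 0.
Proof. by rewrite lieC lie0l. Qed.
Lemma lieDr (X Y Z : V) : lie Z (X + Y) = lie Z X + lie Z Y.
Proof. by rewrite !(lieC Z) lieDl. Qed.
Lemma lieZr a (X Z : V) : lie Z (a *: X) = a * lie Z X.
Proof. by rewrite !(lieC Z) lieZl. Qed.
Lemma lieNr (X Z : V) : lie Z (- X) = - lie Z X.
Proof. by rewrite !(lieC Z) lieNl. Qed.
Lemma lieBr (X Y Z : V) : lie Z (X - Y) = lie Z X - lie Z Y.
Proof. by rewrite !(lieC Z) lieBl. Qed.
Lemma lie_suml m (F : 'I_m -> V) Z : lie (\sum_i F i) Z = \sum_i lie (F i) Z.
Proof. exact: (big_morph (fun x => lie x Z) (fun x y => lieDl x y Z) (lie0l Z)). Qed.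
Lemma lie_sumr m (F : 'I_m -> V) Z : lie Z (\sum_i F i) = \sum_i lie Z (F i).
Proof. rewrite lieC lie_suml; apply: eq_bigr => i _; exact: lieC. Qed.

Definition Gm (f : nat -> V) m := \det (\matrix_(i < m, j < m) lie (f i) (f j)).

Lemma DeltaE (s : seq V) : Delta s = Gm (nth 0 s) (size s).
Proof. by []. Qed.

Lemma Gm_ext m (f g : nat -> V) : (forall i, (i < m)%N -> f i = g i) -> Gm f m = Gm g m.
Proof. by move=> H; rewrite /Gm; congr (\det _); apply/matrixP => i j; rewrite !mxE !H. Qed.

Lemma Gm_lin m (f g : nat -> V) (B : 'M[R]_m) :
  (forall i : 'I_m, g i = \sum_j B i j *: f j) -> Gm g m = \det B ^+ 2 * Gm f m.
Proof.
move=> H; rewrite /Gm.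
have -> : \matrix_(i < m, j < m) lie (g i) (g j)
   = B *m (\matrix_(i < m, j < m) lie (f i) (f j)) *m B^T.
  apply/matrixP => i j; rewrite !mxE !H lie_suml.
  under [RHS]eq_bigr do rewrite !mxE big_distrl.
  rewrite exchange_big /=; apply: eq_bigr => k _.
  rewrite lieZl lie_sumr big_distrr /=; apply: eq_bigr => l _.
  rewrite lieZr !mxE; ring.
by rewrite !det_mulmx det_tr; ring.
Qed.

Lemma sum_delta m (F : 'I_m -> V) (i : 'I_m) : \sum_j (i == j)%:R *: F j = F i.
Proof.
rewrite (bigD1 i) //= eqxx scale1r big1 ?addr0 // => j ji.
by rewrite eq_sym (negPf ji) scale0r.
Qed.

Lemma Gm_perm m (f g : nat -> V) (s : 'S_m) :
  (forall i : 'I_m, g i = f (s i)) -> Gm g m = Gm f m.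
Proof.
move=> H; rewrite (@Gm_lin m f g (perm_mx s)).
  rewrite det_perm; case: (odd_perm s); rewrite /= ?expr1 ?expr0 ?sqrrN ?expr1n mul1r //.
move=> i; rewrite H -(sum_delta (fun j : 'I_m => f j) (s i)).
by apply: eq_bigr => j _; rewrite /perm_mx !mxE.
Qed.

Lemma Gm_orth m (f : nat -> V) (k : 'I_m.+1) :
  (forall j : 'I_m.+1, j != k -> lie (f k) (f j) = 0) ->
  Gm f m.+1 = lie (f k) (f k) * Gm (fun i => f (bump k i)) m.
Proof.
move=> H; rewrite /Gm (expand_det_row _ k) (bigD1 k) //= big1 ?addr0 => [|j jk];
  last by rewrite mxE H ?mul0r.
rewrite mxE /cofactor -signr_odd oddD addbb expr0 mul1r; congr (_ * \det _).
by apply/matrixP => i j; rewrite !mxE.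
Qed.

Lemma Gm2 (f : nat -> V) : Gm f 2 = lie (f 0%N) (f 0%N) * lie (f 1%N) (f 1%N) - lie (f 0%N) (f 1%N) ^+ 2.
Proof.
rewrite /Gm (expand_det_row _ ord0) !big_ord_recl big_ord0 /cofactor !det_mx11 !mxE /=.
rewrite /bump /= ?addn0 ?add0n ?expr0 ?expr1 (lieC (f 1%N)); ring.
Qed.

Lemma Gm3 (f : nat -> V) : Gm f 3 =
  let a := lie (f 0%N) (f 0%N) in let b := lie (f 1%N) (f 1%N) in
  let c := lie (f 2%N) (f 2%N) in let d := lie (f 0%N) (f 1%N) in
  let e := lie (f 0%N) (f 2%N) in let g := lie (f 1%N) (f 2%N) in
  a * b * c + 2 * d * e * g - a * g ^+ 2 - b * e ^+ 2 - c * d ^+ 2.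
Proof.
rewrite /Gm (expand_det_row _ ord0) !big_ord_recl big_ord0 /cofactor.
rewrite !(expand_det_row _ ord0) !big_ord_recl !big_ord0 /cofactor !det_mx11 !mxE /=.
rewrite /bump /= ?addn0 ?add0n ?addn1 ?expr0 ?expr1 (lieC (f 1%N) (f 0%N)) (lieC (f 2%N) (f 0%N)) (lieC (f 2%N) (f 1%N)).
ring.
Qed.
End L.

Section L2.
Variables (R : realFieldType) (n : nat).
Local Notation V := 'rV[R]_(n.+3).

Definition comb m (f : nat -> V) (c : 'I_m -> R) : V := \sum_(i < m) c i *: f i.

Lemma lie_combl m (f : nat -> V) c z : lie (comb f c) z = \sum_(i < m) c i * lie (f i) z.
Proof. by rewrite /comb lie_suml; apply: eq_bigr => i _; rewrite lieZl. Qed.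

Lemma comb_delta m (f : nat -> V) (j : 'I_m) : comb f (fun i => (i == j)%:R) = f j.
Proof.
rewrite /comb -(sum_delta (fun i : 'I_m => f i) j); apply: eq_bigr => i _.
by rewrite eq_sym.
Qed.

Lemma comb_add m (f : nat -> V) c (j : 'I_m) t :
  comb f (fun i => c i + t * (i == j)%:R) = comb f c + t *: f j.
Proof.
rewrite /comb; under eq_bigr do rewrite scalerDl -scalerA.
by rewrite big_split /= -scaler_sumr -(comb_delta f j).
Qed.

Definition sch (f : nat -> V) : nat -> V :=
  fun i => f i.+1 - (lie (f i.+1) (f 0%N) / lie (f 0%N) (f 0%N)) *: f 0%N.

Lemma lie_sch0 (f : nat -> V) i : lie (f 0%N) (f 0%N) != 0 -> lie (sch f i) (f 0%N) = 0.
Proof. by move=> h; rewrite /sch lieBl lieZl mulfVK // subrr. Qed.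

Lemma lie_schS (f : nat -> V) i S :
  lie (f i.+1) S = 0 -> lie (f 0%N) S = 0 -> lie (sch f i) S = 0.
Proof. by move=> h1 h2; rewrite /sch lieBl lieZl h1 h2 mulr0 subrr. Qed.

Lemma Gm_schur m (f : nat -> V) : lie (f 0%N) (f 0%N) != 0 ->
  Gm f m.+1 = lie (f 0%N) (f 0%N) * Gm (sch f) m.
Proof.
move=> hn; set a := lie (f 0%N) (f 0%N).
pose g i := if i is k.+1 then sch f k else f 0%N.
pose B : 'M[R]_(m.+1) := \matrix_(i, j) ((i == j)%:R -
   (((j : nat) == 0%N) && ((i : nat) != 0%N))%:R * (lie (f i) (f 0%N) / a)).
have -> : Gm f m.+1 = Gm g m.+1.
  rewrite (@Gm_lin _ _ m.+1 f g B).
    have -> : \det B = 1.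
      rewrite det_trig; last first.
        apply/is_trig_mxP => i j ij; rewrite mxE.
        rewrite (_ : (i == j) = false); last by apply/negbTE; rewrite neq_ltn ij.
        case: (j : nat) ij => [//|j'] _ /=; rewrite mul0r subrr //.
      by apply: big1 => i _; rewrite mxE eqxx; case: (i : nat) => [|i'] /=; rewrite mul0r subr0.
    by rewrite expr1n mul1r.
  move=> i; under eq_bigr do rewrite mxE scalerBl.
  rewrite sumrB sum_delta (bigD1 ord0) //= big1 => [|j /negPf j0]; last first.
    by rewrite (_ : ((j : nat) == 0%N) = false) ?mul0r ?scale0r //; apply: j0.
  rewrite addr0; case: i => [[|k] hk] /=; first by rewrite mul0r scale0r subr0.
  by rewrite mul1r.
rewrite (@Gm_orth _ _ m g ord0) => [|j j0]; last first.
  rewrite /g; case: j j0 => [[|k] hk] //= _.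
  by rewrite lieC lie_sch0.
by congr (_ * _); apply: Gm_ext => i _; rewrite /bump /= add1n.
Qed.

Lemma comb_sch m (f : nat -> V) (d : 'I_m -> R) :
  exists e : 'I_m.+1 -> R, comb (sch f) d = comb f e.
Proof.
exists (fun i => if unlift ord0 i is Some i' then d i' else
   - \sum_(k < m) d k * (lie (f k.+1) (f 0%N) / lie (f 0%N) (f 0%N))).
rewrite /comb big_ord_recl unlift_none.
rewrite [in RHS](eq_bigr (fun i : 'I_m => d i *: f i.+1)); last by move=> i _; rewrite liftK lift0.
rewrite /sch; under [in LHS]eq_bigr do rewrite scalerBr scalerA.
by rewrite sumrB -scaler_suml scaleNr addrC.
Qed.

Lemma comb_sch2 m (f : nat -> V) (c : 'I_m.+1 -> R) :
  comb f c = (c ord0 + \sum_(i < m) c (lift ord0 i) *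
      (lie (f i.+1) (f 0%N) / lie (f 0%N) (f 0%N))) *: f 0%N
    + comb (sch f) (fun i => c (lift ord0 i)).
Proof.
rewrite /comb big_ord_recl /sch.
under [X in _ = _ + X]eq_bigr do rewrite scalerBr scalerA.
under [in LHS]eq_bigr do rewrite lift0.
rewrite sumrB scalerDl -scaler_suml addrACA subrr addr0 //.
Qed.

Lemma no3neg (A B C : V) : lie A A < 0 -> lie B B < 0 -> lie C C < 0 ->
  lie A B = 0 -> lie A C = 0 -> lie B C = 0 -> False.
Proof.
move=> hA hB hC hAB hAC hBC.
pose X i := nth 0 [:: A; B; C] i.
pose M : 'M[R]_3 := \matrix_(i, j) (if (j : nat) == 0%N then (X i) 0 (inord n.+2)
   else if (j : nat) == 1%N then (X i) 0 ord0 - (X i) 0 (inord n.+1) else 0).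
have : \det M == 0.
  rewrite -det_tr (expand_det_row _ (Ordinal (isT : (2 < 3)%N))) big1 // => j _.
  by rewrite !mxE /= mul0r.
move/det0P => [v vnz vM].
set v0 := v 0 ord0; set v1 := v 0 (lift ord0 (ord0 : 'I_2)).
set v2 := v 0 (lift ord0 (lift ord0 (ord0 : 'I_1))).
set z := v0 *: A + v1 *: B + v2 *: C.
have e0 := congr1 (fun M : 'rV_3 => M 0 ord0) vM.
have e1 := congr1 (fun M : 'rV_3 => M 0 (Ordinal (isT : (1 < 3)%N))) vM.
rewrite /= !mxE !big_ord_recl !big_ord0 !mxE /= in e0 e1.
rewrite /X /bump /= ?add1n ?addn0 in e0 e1.
have z3 : z 0 (inord n.+2) = 0 by rewrite /z !mxE -e0 /v0 /v1 /v2; ring.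
have z02 : z 0 ord0 = z 0 (inord n.+1).
  by apply/eqP; rewrite -subr_eq0; rewrite /z !mxE; apply/eqP; rewrite -e1 /v0 /v1 /v2; ring.
have hpos : 0 <= lie z z.
  rewrite /lie z3 -z02 mulr0 subr0.
  have : 0 <= \sum_(i < n) z 0 (inord i.+1) * z 0 (inord i.+1).
    by apply: sumr_ge0 => i _; rewrite -expr2 sqr_ge0.
  have := sqr_ge0 (z 0 ord0); rewrite expr2; lra.
have hzz : lie z z = v0 ^+ 2 * lie A A + v1 ^+ 2 * lie B B + v2 ^+ 2 * lie C C.
  rewrite /z !(lieDl, lieDr, lieZl, lieZr) (lieC B A) (lieC C A) (lieC C B) hAB hAC hBC.
  ring.
rewrite hzz in hpos.
have h0 := sqr_ge0 v0; have h1 := sqr_ge0 v1; have h2 := sqr_ge0 v2.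
have k0 : v0 ^+ 2 * lie A A <= 0 by rewrite mulr_ge0_le0 // ltW.
have k1 : v1 ^+ 2 * lie B B <= 0 by rewrite mulr_ge0_le0 // ltW.
have k2 : v2 ^+ 2 * lie C C <= 0 by rewrite mulr_ge0_le0 // ltW.
have q0 : v0 ^+ 2 * lie A A = 0 by lra.
have q1 : v1 ^+ 2 * lie B B = 0 by lra.
have q2 : v2 ^+ 2 * lie C C = 0 by lra.
move: q0 q1 q2 => /eqP q0 /eqP q1 /eqP q2; move: q0 q1 q2.
rewrite !mulf_eq0 !orbb (negPf (ltr0_neq0 hA)) (negPf (ltr0_neq0 hB)) (negPf (ltr0_neq0 hC)) !orbF.
move=> /eqP q0 /eqP q1 /eqP q2; move/eqP: vnz; apply; apply/rowP => i.
rewrite !mxE; case: i => [[|[|[|//]]] hi].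
- have -> : Ordinal hi = ord0 by apply/val_inj. exact: q0.
- have -> : Ordinal hi = lift ord0 (ord0 : 'I_2) by apply/val_inj. exact: q1.
- have -> : Ordinal hi = lift ord0 (lift ord0 (ord0 : 'I_1)) by apply/val_inj. exact: q2.
Qed.

End L2.

Section L3.
Variables (R : realFieldType) (n : nat).
Local Notation V := 'rV[R]_(n.+3).

Lemma cs_lemma (u w : V) : (forall t, 0 <= lie (u + t *: w) (u + t *: w)) ->
  0 <= lie w w -> lie u u = 0 -> lie u w = 0.
Proof.
move=> H hb hu.
have E : forall t, lie (u + t *: w) (u + t *: w) = 2 * t * lie u w + t ^+ 2 * lie w w.
  by move=> t; rewrite !(lieDl, lieDr, lieZl, lieZr) hu (lieC w u); ring.
move: (lie u w) (lie w w) hb E => a b hb E.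
have hb1 : 0 < b + 1 by lra.
have E2 : 2 * (- a / (b + 1)) * a + (- a / (b + 1)) ^+ 2 * b = - (a ^+ 2 * (b + 2)) / (b + 1) ^+ 2.
  field; lra.
have := H (- a / (b + 1)); rewrite E E2 => h.
have h2 : 0 <= - (a ^+ 2 * (b + 2)).
  have := mulr_ge0 h (ltW (exprn_gt0 2 hb1)).
  by rewrite mulfVK // expf_neq0 // gt_eqF.
have ha : a ^+ 2 = 0.
  apply/eqP; rewrite eq_le sqr_ge0 andbT.
  have hh : a ^+ 2 * (b + 2) <= 0 by rewrite -oppr_ge0.
  by move: hh; rewrite pmulr_lle0 //; lra.
by move/eqP: ha; rewrite sqrf_eq0 => /eqP.
Qed.

Lemma psd_Gm m : forall f : nat -> V,
  (forall c : 'I_m -> R, 0 <= lie (comb f c) (comb f c)) -> 0 <= Gm f m.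
Proof.
elim: m => [|m IH] f H; first by rewrite /Gm det_mx00 ler01.
have hv : 0 <= lie (f 0%N) (f 0%N).
  by have := H (fun i => (i == ord0)%:R); rewrite comb_delta.
case: (eqVneq (lie (f 0%N) (f 0%N)) 0) => [h0|hn].
  rewrite (@Gm_orth _ _ m f ord0) ?h0 ?mul0r // => j _.
  apply: cs_lemma => //.
    move=> t; have := H (fun i => (i == ord0)%:R + t * (i == j)%:R).
    by rewrite comb_add comb_delta.
  by have := H (fun i => (i == j)%:R); rewrite comb_delta.
rewrite Gm_schur //; apply: mulr_ge0 => //; apply: IH => d.
by have [e ->] := comb_sch f d; apply: H.
Qed.

Lemma neg_Gm (S : V) : lie S S < 0 -> forall m (f : nat -> V),
  (forall i : 'I_m, lie (f i) S = 0) ->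
  (exists c : 'I_m -> R, lie (comb f c) (comb f c) < 0) -> Gm f m <= 0.
Proof.
move=> hS; elim=> [|m IH] f hf [c hc].
  by move: hc; rewrite /comb big_ord0 lie0l ltxx.
have main : forall g : nat -> V, (forall i : 'I_m.+1, lie (g i) S = 0) ->
    (exists c : 'I_m.+1 -> R, lie (comb g c) (comb g c) < 0) -> lie (g 0%N) (g 0%N) != 0 ->
    Gm g m.+1 <= 0.
  move=> g hg [c' hc'] hn; rewrite Gm_schur //.
  have hsS : forall i : 'I_m, lie (sch g i) S = 0.
    move=> i; apply: lie_schS; last exact: (hg ord0).
    by have := hg (lift ord0 i); rewrite lift0.
  have hs0 : forall d : 'I_m -> R, lie (comb (sch g) d) (g 0%N) = 0.
    move=> d; rewrite lie_combl big1 // => i _; by rewrite lie_sch0 // mulr0.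
  case: (ltrgtP 0 (lie (g 0%N) (g 0%N))) => [hp|hneg|e]; last by rewrite -e eqxx in hn.
  - apply: mulr_ge0_le0; first exact: ltW.
    apply: IH => //; exists (fun i => c' (lift ord0 i)).
    move: hc'; rewrite (comb_sch2 g c'); set al := (c' ord0 + _); set u := comb _ _.
    rewrite !(lieDl, lieDr, lieZl, lieZr) hs0 (lieC (g 0%N) u) hs0 !mulr0 !addr0.
    clearbody al u.
    have : 0 <= al * (al * lie (g 0%N) (g 0%N)).
      by rewrite mulrA -expr2 mulr_ge0 // ?sqr_ge0 // ltW.
    lra.
  - apply: mulr_le0_ge0; first exact: ltW.
    apply: psd_Gm => d; rewrite leNgt; apply/negP => hd.
    apply: (no3neg hd hneg hS (hs0 d) _ (hg ord0)).
    by rewrite lie_combl big1 // => i _; rewrite hsS mulr0.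
case: (eqVneq (lie (f 0%N) (f 0%N)) 0) => [h0|hn]; last by apply: main => //; exists c.
case: (boolP [forall j : 'I_m.+1, lie (f 0%N) (f j) == 0]) => [/forallP hall|].
  by rewrite (@Gm_orth _ _ m f ord0) ?h0 ?mul0r // => j _; apply/eqP/hall.
rewrite negb_forall => /existsP [j /eqP hj].
have j0 : (j : nat) != 0%N.
  apply/eqP => e; apply: hj; have -> : j = ord0 by apply/val_inj.
  exact: h0.
have [t ht] : exists t : R, 2 * t * lie (f 0%N) (f j) + t ^+ 2 * lie (f j) (f j) != 0.
  case: (eqVneq (2 * 1 * lie (f 0%N) (f j) + 1 ^+ 2 * lie (f j) (f j)) 0) => [e|ne]; last by exists 1.
  exists (-1); apply/eqP => e2; apply: hj; lra.
pose f' i := if i == 0%N then f 0%N + t *: f j else f i.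
pose B : 'M[R]_(m.+1) := \matrix_(i, k) ((i == k)%:R + t * (((i : nat) == 0%N) && (j == k))%:R).
have Gmeq : Gm f' m.+1 = Gm f m.+1.
  rewrite (@Gm_lin _ _ m.+1 f f' B).
    have -> : \det B = 1.
      rewrite -det_tr det_trig; last first.
        apply/is_trig_mxP => i k ik; rewrite !mxE.
        rewrite (_ : (k == i) = false); last by apply/negbTE; rewrite neq_ltn ik orbT.
        by case: (k : nat) ik => [//|k'] _ /=; rewrite mulr0 addr0.
      apply: big1 => i _; rewrite !mxE eqxx.
      case: (eqVneq (i : nat) 0%N) => [i0|_] /=; last by rewrite mulr0 addr0.
      rewrite (_ : (j == i) = false) ?mulr0 ?addr0 //.
      by apply/negbTE; apply: contra j0 => /eqP ->; rewrite i0.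
    by rewrite expr1n mul1r.
  move=> i; under eq_bigr do rewrite mxE scalerDl -scalerA.
  rewrite big_split /= sum_delta /f'.
  case: (eqVneq (i : nat) 0%N) => [i0|ni0].
    by rewrite i0 /= -scaler_sumr (sum_delta (fun k : 'I_m.+1 => f k) j).
  by rewrite big1 ?addr0 // => k _; rewrite andFb scale0r scaler0.
rewrite -Gmeq; apply: main.
- move=> i; rewrite /f'; case: ifP => _ //.
  by rewrite lieDl lieZl (hf ord0) (hf j) mulr0 addr0.
- exists (fun i => c i + (- (c ord0 * t)) * (i == j)%:R).
  have -> : comb f' (fun i => c i + (- (c ord0 * t)) * (i == j)%:R) =
      comb f (fun i => c i + (- (c ord0 * t)) * (i == j)%:R) +
      (c ord0 + (- (c ord0 * t)) * (ord0 == j)%:R) * t *: f j.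
    rewrite /comb !big_ord_recl /f' /= scalerDr scalerA.
    by rewrite addrAC.
  rewrite comb_add (_ : (ord0 == j) = false); last first.
    by apply/negbTE; apply: contra j0 => /eqP <-.
  by rewrite mulr0 addr0 scaleNr addrNK.
- rewrite /f' /= !(lieDl, lieDr, lieZl, lieZr) h0 (lieC (f j) (f 0%N)).
  by move: ht; rewrite mulrA; apply: contra => /eqP h; apply/eqP; rewrite -h; ring.
Qed.

End L3.

Section L5.
Variables (R : realFieldType) (n : nat).
Local Notation V := 'rV[R]_(n.+3).

Lemma lor_pos (S : V) : lie S S < 0 -> forall m (f : nat -> V),
  (forall i : 'I_m, lie (f i) S = 0) -> 0 < Gm f m ->
  forall c : 'I_m -> R, comb f c != 0 -> 0 < lie (comb f c) (comb f c).
Proof.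
move=> hS m f hf hG c hc; rewrite ltNge; apply/negP => hle.
have hpsd : forall d : 'I_m -> R, 0 <= lie (comb f d) (comb f d).
  move=> d; rewrite leNgt; apply/negP => hd.
  by have := neg_Gm hS hf (ex_intro _ d hd); rewrite leNgt hG.
have hu : lie (comb f c) (comb f c) = 0 by apply/eqP; rewrite eq_le hle hpsd.
have hort : forall j : 'I_m, lie (comb f c) (f j) = 0.
  move=> j; apply: cs_lemma => //.
    by move=> t; have := hpsd (fun i => c i + t * (i == j)%:R); rewrite comb_add.
  by have := hpsd (fun i => (i == j)%:R); rewrite comb_delta.
have : \det (\matrix_(i < m, j < m) lie (f i) (f j)) == 0.
  apply/det0P; exists (\row_i c i).
    apply: contra hc => /eqP e; apply/eqP; rewrite /comb big1 // => i _.
    by have := congr1 (fun r : 'rV_m => r 0 i) e; rewrite !mxE => ->; rewrite scale0r.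
  apply/rowP => j; rewrite !mxE (eq_bigr (fun i => c i * lie (f i) (f j))); last by move=> i _; rewrite !mxE.
  by rewrite -lie_combl hort.
by move/eqP => e; move: hG; rewrite /Gm e ltxx.
Qed.

Lemma span_coord (s : seq V) v : v \in <<s>>%VS ->
  exists c : nat -> R, v = \sum_(i < size s) c i *: s`_i.
Proof.
move=> hv; have := coord_span (X := in_tuple s) hv => ->.
exists (fun i => if insub i is Some j then coord (in_tuple s) j v else 0).
by apply: eq_bigr => i _; rewrite valK.
Qed.

Lemma pos_perp (S : V) (Xs : seq V) : lie S S < 0 -> Delta (rcons Xs S) < 0 ->
  forall Q, Q \in <<rcons Xs S>>%VS -> lie Q S = 0 -> Q != 0 -> 0 < lie Q Q.
Proof.
move=> hS hD Q hQ hQS hQ0.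
set k := size Xs; set f := nth 0 (S :: Xs).
have hG : Gm f k.+1 < 0.
  move: hD; rewrite DeltaE size_rcons.
  rewrite (@Gm_perm _ _ k.+1 (nth 0 (rcons Xs S)) f (lift_perm ord0 ord_max 1)) //.
  move=> i; case: (unliftP ord0 i) => [j ->|->].
    rewrite lift_perm_lift perm1 lift_max /f lift0 /= nth_rcons.
    by rewrite (ltn_ord j).
  by rewrite lift_perm_id /f /= nth_rcons ltnn eqxx.
have hQ' : Q \in <<S :: Xs>>%VS.
  by rewrite (_ : <<S :: Xs>>%VS = <<rcons Xs S>>%VS) //; apply: eq_span => x; rewrite mem_rcons.
have [c hc] := span_coord hQ'.
have hs0 : lie (f 0%N) (f 0%N) != 0 by rewrite /f /= ltr0_neq0.
have hc' : Q = comb f (fun i : 'I_k.+1 => c i) by [].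
rewrite Gm_schur // in hG.
have hGs : 0 < Gm (sch f) k.
  rewrite ltNge; apply/negP => h; move: hG; rewrite ltNge => /negP; apply.
  by apply: mulr_le0 => //; rewrite /f /= ltW.
rewrite (comb_sch2 f) in hc'.
set al := (c ord0 + _) in hc'; set u := comb _ _ in hc'.
have hu0 : lie u (f 0%N) = 0.
  by rewrite /u lie_combl big1 // => i _; rewrite lie_sch0 // mulr0.
have hal : al = 0.
  move: hQS; rewrite hc' lieDl lieZl hu0 addr0 => /eqP.
  by rewrite mulf_eq0 (negPf (ltr0_neq0 hS)) orbF => /eqP.
move: hQ0; rewrite hc' hal scale0r add0r => hu.
have hf' : forall i : 'I_k, lie (sch f i) S = 0 by move=> i; apply: lie_sch0.
exact: (lor_pos hS hf' hGs hu).
Qed.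

Lemma exists_perp2 (w : seq V) (S Y : V) : free w -> (3 <= size w)%N ->
  exists X0, [/\ X0 \in <<w>>%VS, X0 != 0, lie X0 S = 0 & lie X0 Y = 0].
Proof.
move=> fw hw; set m := size w.
pose M : 'M[R]_m := \matrix_(i, j) (if (j : nat) == 0%N then lie w`_i S
   else if (j : nat) == 1%N then lie w`_i Y else 0).
have : \det M == 0.
  rewrite -det_tr (expand_det_row _ (Ordinal hw)) big1 // => j _.
  by rewrite !mxE /= mul0r.
move/det0P => [v vnz vM].
exists (\sum_(i < m) v 0 i *: w`_i); split.
- apply: rpred_sum => i _; apply: rpredZ; apply: memv_span; exact: mem_nth.
- apply: contra vnz => /eqP e; apply/eqP/rowP => i; rewrite mxE.
  by move/(@freeP _ _ _ (in_tuple w)): fw => /(_ (fun i => v 0 i) e i).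
- rewrite lie_suml; have := congr1 (fun r : 'rV_m => r 0 (Ordinal (ltnW (ltnW hw)))) vM.
  rewrite !mxE => e; apply: (etrans _ e); apply: eq_bigr => i _; by rewrite lieZl !mxE.
- rewrite lie_suml; have := congr1 (fun r : 'rV_m => r 0 (Ordinal (ltnW hw))) vM.
  rewrite !mxE => e; apply: (etrans _ e); apply: eq_bigr => i _; by rewrite lieZl !mxE.
Qed.

End L5.

Section L6.
Variables (R : realFieldType).

Lemma hd_rat (N0 N1 N2 D0 D1 D2 K : R) : D0 != 0 -> K != 0 -> N1 * D0 = N0 * D1 ->
  has_deriv (fun t => (N0 + N1 * t + N2 * t ^+ 2) / ((D0 + D1 * t + D2 * t ^+ 2) * K)) 0 0.
Proof.
move=> hD hK hN eps he.
have hA : 0 < `|D1| + `|D2| + 1 by have := normr_ge0 D1; have := normr_ge0 D2; lra.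
have hD0 : 0 < `|D0| by rewrite normr_gt0.
have hK0 : 0 < `|K| by rewrite normr_gt0.
have hQ : 0 < `|D0| ^+ 2 * `|K| by rewrite mulr_gt0 // exprn_gt0.
have hM : 0 <= 2 * `|N2 * D0 - N0 * D2| / (`|D0| ^+ 2 * `|K|).
  by apply: divr_ge0; [apply: mulr_ge0 => //; apply: ler0n | apply: ltW].
move: hM; move eM : (2 * `|N2 * D0 - N0 * D2| / (`|D0| ^+ 2 * `|K|)) => M hM.
have hd1 : 0 < `|D0| / (2 * (`|D1| + `|D2| + 1)) by rewrite divr_gt0 // mulr_gt0.
have hd2 : 0 < eps / (M + 1) by rewrite divr_gt0 //; lra.
exists (Num.min 1 (Num.min (`|D0| / (2 * (`|D1| + `|D2| + 1))) (eps / (M + 1)))).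
  by rewrite !lt_min ltr01 hd1 hd2.
move=> t /andP [ht0 htd]; rewrite subr0 in ht0 htd.
move: htd; rewrite !lt_min => /and3P [ht1 ht2 ht3].
rewrite ltr_pdivlMr ?mulr_gt0 // in ht2.
have hM1 : 0 < M + 1 by lra.
rewrite ltr_pdivlMr // in ht3.
have tn0 : t != 0 by rewrite -normr_gt0.
have hdiff : `|D1 * t + D2 * t ^+ 2| <= `|t| * (`|D1| + `|D2| + 1).
  rewrite (_ : D1 * t + D2 * t ^+ 2 = t * (D1 + D2 * t)); last by ring.
  rewrite normrM ler_wpM2l //; apply: le_trans (ler_normD _ _) _.
  rewrite normrM; have := normr_ge0 D1; have := normr_ge0 D2.
  have : `|D2| * `|t| <= `|D2| by rewrite ler_piMr // ltW.
  lra.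
have hDt : `|D0| / 2 <= `|D0 + D1 * t + D2 * t ^+ 2|.
  have := lerB_normD D0 (D1 * t + D2 * t ^+ 2); rewrite addrA.
  have : `|t| * (`|D1| + `|D2| + 1) * 2 <= `|D0|.
    have e : `|t| * (2 * (`|D1| + `|D2| + 1)) = `|t| * (`|D1| + `|D2| + 1) * 2 by ring.
    by rewrite -e ltW.
  lra.
have Dt0 : D0 + D1 * t + D2 * t ^+ 2 != 0.
  by rewrite -normr_gt0; apply: lt_le_trans hDt; rewrite divr_gt0.
rewrite subr0 /=.
have hN1 : N1 = N0 * D1 / D0 by rewrite -hN mulfK.
have -> : ((N0 + N1 * t + N2 * t ^+ 2) / ((D0 + D1 * t + D2 * t ^+ 2) * K) -
     (N0 + N1 * 0 + N2 * 0 ^+ 2) / ((D0 + D1 * 0 + D2 * 0 ^+ 2) * K)) / (t - 0)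
   = t * (N2 * D0 - N0 * D2) / ((D0 + D1 * t + D2 * t ^+ 2) * D0 * K).
  by rewrite hN1; field; rewrite ?Dt0 ?hD ?hK ?tn0.
move: (D0 + D1 * t + D2 * t ^+ 2) hDt Dt0 => Dt hDt Dt0.
have hDtp : 0 < `|Dt| by rewrite normr_gt0.
rewrite normrM normfV !normrM.
have hP : `|D0| ^+ 2 * `|K| / 2 <= `|Dt| * `|D0| * `|K|.
  have e : `|D0| ^+ 2 * `|K| / 2 = (`|D0| / 2) * `|D0| * `|K| by field.
  by rewrite e; apply: ler_wpM2r; [exact: normr_ge0|]; apply: ler_wpM2r => //; exact: normr_ge0.
have hPi : (`|Dt| * `|D0| * `|K|)^-1 <= 2 * (`|D0| ^+ 2 * `|K|)^-1.
  have e : 2 * (`|D0| ^+ 2 * `|K|)^-1 = (`|D0| ^+ 2 * `|K| / 2)^-1.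
    by field; rewrite !gt_eqF.
  by rewrite e lef_pV2 // posrE ?mulr_gt0 ?divr_gt0 // invr_gt0 ltr0n.
have hfin : `|t| * M < eps.
  have := normr_ge0 t; nra.
apply: (le_lt_trans _ hfin).
have := ler_wpM2l (mulr_ge0 (normr_ge0 t) (normr_ge0 (N2 * D0 - N0 * D2))) hPi.
move=> h; apply: le_trans h _; rewrite -eM.
by rewrite le_eqVlt; apply/orP; left; apply/eqP; ring.
Qed.

Lemma has_deriv_ext (f g : R -> R) t0 l : (forall t, f t = g t) ->
  has_deriv g t0 l -> has_deriv f t0 l.
Proof.
move=> e H eps he; have [d hd H'] := H eps he; exists d => // t ht.
by rewrite !e; apply: H'.
Qed.

Variable (n : nat).
Local Notation V := 'rV[R]_(n.+3).

Lemma hfunE (Y S X : V) : lie Y Y = 0 -> hfun Y S X =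
  (2 * lie X Y * lie X S * lie Y S - lie X X * lie Y S ^+ 2 - lie S S * lie X Y ^+ 2) /
  ((lie X X * lie S S - lie X S ^+ 2) * (- lie Y S ^+ 2)).
Proof.
move=> hY; rewrite /hfun !DeltaE /= Gm3 !Gm2 /= hY.
congr (_ / (_ * _)); ring.
Qed.

Lemma crit_gen (Y S X0 : V) (W : {vspace V}) :
  lie Y Y = 0 -> lie Y S != 0 -> lie X0 X0 * lie S S - lie X0 S ^+ 2 != 0 ->
  (forall Vv, Vv \in W ->
     let a0 := lie X0 X0 in let b0 := lie X0 Y in let c0 := lie X0 S in
     let u := lie X0 Vv in let w := lie Vv Y in let z := lie Vv S in
     let m := lie Y S in let s := lie S S in
     (2 * m * (b0 * z + w * c0) - 2 * u * m ^+ 2 - 2 * s * b0 * w) * (a0 * s - c0 ^+ 2)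
     = (2 * b0 * c0 * m - a0 * m ^+ 2 - s * b0 ^+ 2) * (2 * u * s - 2 * c0 * z)) ->
  critical_point W (hfun Y S) X0.
Proof.
move=> hY hm hD0 H Vv hV; have := H Vv hV => /= {}H.
set a0 := lie X0 X0; set b0 := lie X0 Y; set c0 := lie X0 S.
set u := lie X0 Vv; set vv := lie Vv Vv; set w := lie Vv Y; set z := lie Vv S.
set m := lie Y S; set s := lie S S.
apply: (has_deriv_ext (g := fun t =>
  ((2 * b0 * c0 * m - a0 * m ^+ 2 - s * b0 ^+ 2)
   + (2 * m * (b0 * z + w * c0) - 2 * u * m ^+ 2 - 2 * s * b0 * w) * t
   + (2 * m * w * z - vv * m ^+ 2 - s * w ^+ 2) * t ^+ 2) /
  (((a0 * s - c0 ^+ 2) + (2 * u * s - 2 * c0 * z) * t + (vv * s - z ^+ 2) * t ^+ 2)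
   * (- m ^+ 2)))).
  move=> t; rewrite hfunE //.
  rewrite !(lieDl, lieDr, lieZl, lieZr) (lieC Vv X0) -/a0 -/b0 -/c0 -/u -/vv -/w -/z -/m -/s.
  congr (_ / (_ * _)); ring.
apply: hd_rat => //; first by rewrite oppr_eq0 expf_neq0.
Qed.

End L6.

Lemma key_delta (R : realFieldType) (n : nat) (Xs : seq 'rV[R]_(n.+3)) (S Y P : 'rV[R]_(n.+3)) :
  P \in <<rcons Xs S>>%VS ->
  (forall Z, Z \in <<rcons Xs S>>%VS -> lie (Y - P) Z = 0) ->
  Delta (Xs ++ [:: Y; S]) = lie (Y - P) (Y - P) * Delta (rcons Xs S).
Proof.
move=> hPW hperp.
set k := size Xs.
have [c hc] := span_coord hPW.
rewrite size_rcons in hc.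
set f := nth 0 (rcons (rcons Xs S) Y).
set f2 := nth 0 (rcons (rcons Xs S) (Y - P)).
have -> : Delta (Xs ++ [:: Y; S]) = Gm f k.+2.
  rewrite DeltaE size_cat /= addn2.
  apply: (@Gm_perm _ _ k.+2 f _ (tperm (inord k) (inord k.+1))) => i.
  have hi := ltn_ord i.
  have hk1 : (k < k.+2)%N by rewrite ltnS leqnSn.
  have hk2 : (k.+1 < k.+2)%N by rewrite ltnSn.
  case: (ltnP i k) => hik.
    have h1 : inord k != i by apply/eqP => e; move: hik; rewrite -e inordK // ltnn.
    have h2 : inord k.+1 != i.
      by apply/eqP => e; move: hik; rewrite -e inordK // ltnNge leqnSn.
    rewrite tpermD //.
    by rewrite /f nth_cat -/k hik !nth_rcons size_rcons -/k hik (leqW hik).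
  case: (eqVneq (i : nat) k) => [ik|ik].
    have -> : i = inord k by apply/val_inj; rewrite /= inordK // ik.
    rewrite tpermL /f nth_rcons size_rcons -/k (@inordK k.+1 k.+1) // ltnn eqxx.
    by rewrite (@inordK k.+1 k) // nth_cat -/k ltnn subnn.
  have ik1 : (i : nat) = k.+1 by apply/eqP; rewrite eqn_leq -ltnS hi /= ltn_neqAle eq_sym ik hik.
  have -> : i = inord k.+1 by apply/val_inj; rewrite /= inordK // ik1.
  by rewrite tpermR /f nth_rcons size_rcons -/k (@inordK k.+1 k) // ltnSn nth_rcons -/k ltnn eqxx (@inordK k.+1 k.+1) // nth_cat -/k ltnNge leqnSn /= subSnn.
pose B : 'M[R]_(k.+2) := \matrix_(i, j) ((i == j)%:R +
   ((i == ord_max) && (j != ord_max))%:R * c j).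
rewrite (@Gm_lin _ _ k.+2 f2 f B); last first.
  move=> i; under eq_bigr do rewrite mxE scalerDl -scalerA.
  rewrite big_split /= sum_delta.
  case: (eqVneq i ord_max) => [->|ni].
    rewrite big_ord_recr /= eqxx /= scale0r addr0.
    rewrite (eq_bigr (fun j : 'I_k.+1 => c j *: (rcons Xs S)`_j)); last first.
      move=> j _; rewrite (_ : (widen_ord _ j != ord_max) = true); last by rewrite neq_ltn /= ltn_ord.
      by rewrite scale1r /f2 /= nth_rcons size_rcons ltn_ord.
    by rewrite -hc /f /f2 !nth_rcons !size_rcons -/k ltnn eqxx subrK.
  rewrite big1 ?addr0; last by move=> j _; rewrite andFb scale0r.
  have hi : (i < k.+1)%N by rewrite ltn_neqAle -ltnS ltn_ord andbT; apply: contra ni => /eqP e; apply/eqP/val_inj.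
  by rewrite /f /f2 !nth_rcons size_rcons hi.
have -> : \det B = 1.
  rewrite det_trig; last first.
    apply/is_trig_mxP => i j ij; rewrite mxE.
    rewrite (_ : (i == j) = false); last by apply/negbTE; rewrite neq_ltn ij.
    rewrite (_ : (i == ord_max) = false) ?mul0r ?addr0 //.
    by apply/negbTE; rewrite neq_ltn /= (leq_trans ij) // -ltnS ltn_ord.
  by apply: big1 => i _; rewrite mxE eqxx; case: (i == ord_max); rewrite /= ?mul0r ?addr0.
rewrite expr1n mul1r.
rewrite (@Gm_orth _ _ k.+1 f2 ord_max).
  congr (_ * _); first by rewrite /f2 nth_rcons size_rcons ltnn eqxx.
  rewrite DeltaE size_rcons; apply: Gm_ext => i hi.
  by rewrite /f2 /bump /= leqNgt hi add0n nth_rcons size_rcons hi.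
move=> j jm; rewrite /f2 nth_rcons size_rcons ltnn eqxx.
have hj : (j < k.+1)%N by rewrite ltn_neqAle -ltnS ltn_ord andbT; apply: contra jm => /eqP e; apply/eqP/val_inj.
rewrite nth_rcons size_rcons hj; apply: hperp; apply: memv_span; apply: mem_nth.
by rewrite size_rcons.
Qed.

Unset Implicit Arguments. Set Strict Implicit.

Theorem mainTheorem10 (R : realFieldType) (n : nat) (Xs : seq 'rV[R]_(n.+3))
    (S Y P : 'rV[R]_(n.+3)) :
  (3 <= n)%N ->
  (2 <= size Xs)%N -> (size Xs <= n - 1)%N ->
  (forall X, X \in Xs -> lie X X = 0) ->
  lie S S <= 0 ->
  free (rcons Xs S) ->
  Delta (rcons Xs S) < 0 ->
  lie Y Y = 0 -> Y != 0 ->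
  Y \notin <<rcons Xs S>>%VS ->
  lie Y S != 0 ->
  (* P = P_<X,S> Y : the Lie orthogonal projection of Y onto <X,S> along <X,S>^perp *)
  P \in <<rcons Xs S>>%VS ->
  (forall Z, Z \in <<rcons Xs S>>%VS -> lie (Y - P) Z = 0) ->
  (* p <> s *)
  P \notin <[S]>%VS ->
  [/\ Delta [:: P; S] != 0,
      hfun Y S P = discr Xs Y S,
      critical_point <<rcons Xs S>>%VS (hfun Y S) P
    & lie S S < 0 ->
      (exists X0, [/\ X0 \in <<rcons Xs S>>%VS, lie X0 S = 0,
                      X0 \notin <[S]>%VS & lie X0 Y = 0]) /\
      (forall X0, X0 \in <<rcons Xs S>>%VS -> lie X0 S = 0 ->
                  X0 \notin <[S]>%VS -> lie X0 Y = 0 ->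
         [/\ Delta [:: X0; S] != 0,
             critical_point <<rcons Xs S>>%VS (hfun Y S) X0
           & hfun Y S X0 = 1 / lie S S])].
Proof.
move=> _ hk _ _ hSS hfree hD hYY _ _ hYS hPW hperp hPS.
have hSW : S \in <<rcons Xs S>>%VS by apply: memv_span; rewrite mem_rcons mem_head.
have hPS' : lie P S = lie Y S.
  by have := hperp S hSW; rewrite lieBl => /eqP; rewrite subr_eq0 => /eqP.
have hPY : lie P Y = lie P P.
  by have := hperp P hPW; rewrite lieBl (lieC Y P) => /eqP; rewrite subr_eq0 => /eqP.
have hVY : forall V, V \in <<rcons Xs S>>%VS -> lie V Y = lie P V.
  move=> V hV; have := hperp V hV; rewrite lieBl (lieC Y V) (lieC P V) => /eqP.
  by rewrite subr_eq0 => /eqP.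
have hDw : Delta (rcons Xs S) != 0 by rewrite ltr0_neq0.
have hm2 : lie Y S ^+ 2 != 0 by rewrite expf_neq0.
have hDP : lie P P * lie S S - lie P S ^+ 2 != 0.
  rewrite hPS'; case: (ltrgtP (lie S S) 0) => [hs|hs|hs]; last first.
  - by rewrite hs mulr0 sub0r oppr_eq0.
  - by move: hSS; rewrite leNgt hs.
  set Q := P - (lie Y S / lie S S) *: S.
  have hQW : Q \in <<rcons Xs S>>%VS by rewrite rpredB // rpredZ.
  have hQS : lie Q S = 0.
    by rewrite /Q lieBl lieZl hPS' mulfVK ?subrr // ltr0_neq0.
  have hQ0 : Q != 0.
    apply: contra hPS => /eqP e; apply/vlineP; exists (lie Y S / lie S S).
    by apply/eqP; rewrite -subr_eq0 -/Q e.
  have hQQ := pos_perp hs hD hQW hQS hQ0.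
  have e : lie P P * lie S S - lie Y S ^+ 2 = lie S S * lie Q Q.
    rewrite /Q !(lieBl, lieBr, lieZl, lieZr) (lieC S P) hPS'.
    by field; rewrite ltr0_neq0.
  by rewrite e mulf_neq0 // ?(ltr0_neq0 hs) ?(lt0r_neq0 hQQ).
have hDP' : Delta [:: P; S] != 0 by rewrite DeltaE Gm2.
split => //.
- rewrite hfunE // /discr (@key_delta _ _ _ _ _ _ hPW hperp).
  rewrite (DeltaE [:: Y; S]) Gm2 /= hYY mul0r sub0r.
  rewrite hPY hPS' !(lieBl, lieBr) hYY (lieC Y P) hPY.
  move: hDP; rewrite hPS' => hDP.
  by field; rewrite hYS hDw hDP.
- apply: crit_gen => //.
  move=> V hV /=; rewrite hPY hPS' (hVY V hV); ring.
move=> hs; split.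
  have hw3 : (3 <= size (rcons Xs S))%N by rewrite size_rcons ltnS.
  have [X0 [hX0W hX00 hX0S hX0Y]] := exists_perp2 S Y hfree hw3.
  exists X0; split => //.
  apply/negP => /vlineP [a ha]; move: hX00; rewrite ha.
  move: hX0S; rewrite ha lieZl => /eqP; rewrite mulf_eq0 (negPf (ltr0_neq0 hs)) orbF.
  by move/eqP => ->; rewrite scale0r eqxx.
move=> X0 hX0W hX0S hX0L hX0Y.
have hX00 : X0 != 0 by apply: contra hX0L => /eqP ->; rewrite mem0v.
have hXX := pos_perp hs hD hX0W hX0S hX00.
have hDX : lie X0 X0 * lie S S - lie X0 S ^+ 2 != 0.
  by rewrite hX0S expr0n /= subr0 mulf_neq0 // ?(ltr0_neq0 hs) ?(lt0r_neq0 hXX).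
split.
- by rewrite DeltaE Gm2.
- apply: crit_gen => //.
  move=> V hV /=; rewrite hX0S hX0Y; ring.
- rewrite hfunE // hX0S hX0Y; field.
  by rewrite (ltr0_neq0 hs) hYS (lt0r_neq0 hXX).
Qed.
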